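(* Let $I$ be a small directed category and let $A_I$ be the poset constructed from $I$ as described in the context. Then $A_I$ is a cofinite directed poset of infinite height.
   Context: Posets are categories with a unique morphism $u\to v$ iff $u\geq v$. A poset is cofinite if each $\{z\mid z\le x\}$ is finite; directed if nonempty with common upper bounds for pairs; of infinite height if each element has a strictly larger one. A subset $R$ of a poset $T$ is a section if $x\in R$, $y<x$ imply $y\in R$. For a category $\mathcal{R}$, $\mathcal{R}^{\lhd}$ is $\mathcal{R}$ with a new initial object $\infty$ adjoined. A category $I$ is directed if nonempty, any two objects admit an object mapping to both, and any parallel pair $f,g:s\to t$ is equalized by some $h:u\to s$. Construction: set $A_I^{-1}=\emptyset$ and $p^{-1}_I$ the empty functor. Given a poset $A_I^n$ and a functor $p_I^n:A_I^n\to I$, let $B_I^{n+1}$ be the set of pairs $(R,p)$ with $R$ a finite section of $A_I^n$ and $p:R^{\lhd}\to I$ a functor with $p|_R=p_I^n|_R$. Set $A_I^{n+1}=A_I^n\sqcup B_I^{n+1}$, with the order of $A_I^n$ extended by $c<(R,p)$ iff $c\in R$ (for $c\in A_I^n$), and $p_I^{n+1}$ extending $p_I^n$ with $p_I^{n+1}(R,p)=p(\infty)$ (on morphisms $(R,p)\to c$ it is $p(\infty\to c)$). Let $A_I=\bigcup_n A_I^n$ and $p_I:A_I\to I$ the union of the $p_I^n$. *)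

(* Defs.v *)
From Stdlib Require Import List.
Set Implicit Arguments.

Record Cat := {
  Ob : Type;
  Hom : Ob -> Ob -> Type;
  idm : forall a, Hom a a;
  comp : forall a b c, Hom b c -> Hom a b -> Hom a c;
  comp_id_l : forall a b (f : Hom a b), comp (idm b) f = f;
  comp_id_r : forall a b (f : Hom a b), comp f (idm a) = f;
  comp_assoc : forall a b c d (h : Hom c d) (g : Hom b c) (f : Hom a b),
      comp h (comp g f) = comp (comp h g) f
}.
Arguments idm {c} a : rename.
Arguments comp {c a b c0} _ _ : rename.

Definition directed_cat (I : Cat) : Prop :=
  inhabited (Ob I) /\
  (forall s t : Ob I, exists u (f : Hom I u s) (g : Hom I u t), True) /\
  (forall (s t : Ob I) (f g : Hom I s t),
      exists u (h : Hom I u s), comp f h = comp g h).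

(* A stage is a set A^n with a relation (x <= y) and a functor p^n to I:
   a morphism u -> v exists iff u >= v, i.e. Sle v u, and is sent to
   Smor u v _ : Hom (p u) (p v). *)
Record Stage (I : Cat) := {
  St : Type;
  Sle : St -> St -> Prop;
  Sob : St -> Ob I;
  Smor : forall x y, Sle y x -> Hom I (Sob x) (Sob y)
}.
Arguments St {I} s.
Arguments Sle {I} s _ _.
Arguments Sob {I} s _.
Arguments Smor {I} s x y _.

Definition Slt {I} (s : Stage I) (x y : St s) : Prop := Sle s x y /\ x <> y.

(* The pairs (R,p) of B^{n+1}: R a finite section of A^n, and p a functor
   R^lhd -> I with p|_R = p^n|_R.  Such a functor is exactly the datum of
   p(oo) together with the morphisms p(oo -> c), c in R, satisfying
   functoriality p(c -> d) o p(oo -> c) = p(oo -> d) for d <= c in R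
   (p(oo -> oo) = id and the rest being forced by p|_R = p^n|_R). *)
Record Bnew {I : Cat} (s : Stage I) := {
  bR : St s -> Prop;
  bR_finite : exists l : list (St s), forall x, bR x <-> In x l;
  bR_section : forall x y, bR x -> Slt s y x -> bR y;
  binf : Ob I;
  bmor : forall c, bR c -> Hom I binf (Sob s c);
  bmor_funct : forall c d (hc : bR c) (hd : bR d) (h : Sle s d c),
      @bmor d hd = comp (Smor s c d h) (@bmor c hc)
}.
Arguments bR {I s} b _.
Arguments binf {I s} b.
Arguments bmor {I s} b c _.

Unset Implicit Arguments.

Definition ext_le {I} (s : Stage I) (x y : St s + Bnew s) : Prop :=
  match x, y with
  | inl x0, inl y0 => Sle s x0 y0
  | inl c, inr b => bR b c
  | inr _, inl _ => False
  | inr b, inr b' => b = b'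
  end.

Definition ext_ob {I} (s : Stage I) (x : St s + Bnew s) : Ob I :=
  match x with inl x0 => Sob s x0 | inr b => binf b end.

Definition ext_mor {I} (s : Stage I) (x y : St s + Bnew s) :
  ext_le s y x -> Hom I (ext_ob s x) (ext_ob s y) :=
  match x as x' , y as y' return ext_le s y' x' -> Hom I (ext_ob s x') (ext_ob s y') with
  | inl x0, inl y0 => fun h => Smor s x0 y0 h
  | inr b, inl c => fun h => bmor b c h
  | inl _, inr _ => fun h => False_rect _ h
  | inr b, inr b' => fun h =>
      match h in _ = z return Hom I (binf z) (binf b') with
      | eq_refl => idm (binf b')
      end
  end.

Definition extend {I} (s : Stage I) : Stage I :=
  {| St := (St s + Bnew s)%type; Sle := ext_le s; Sob := ext_ob s;
     Smor := ext_mor s |}.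

Definition empty_stage (I : Cat) : Stage I :=
  {| St := Empty_set; Sle := fun x _ => match x with end;
     Sob := fun x => match x with end;
     Smor := fun x _ _ => match x with end |}.

(* stage I k = A_I^{k-1}; stage I 0 = A_I^{-1} = empty *)
Fixpoint stage (I : Cat) (k : nat) : Stage I :=
  match k with
  | 0 => empty_stage I
  | S k' => extend (stage I k')
  end.

Fixpoint embed (I : Cat) (m j : nat) : St (stage I m) -> St (stage I (j + m)) :=
  match j return St (stage I m) -> St (stage I (j + m)) with
  | 0 => fun x => x
  | S j' => fun x => inl (embed I m j' x)
  end.

Definition castSt (I : Cat) (m n : nat) (e : m = n) (x : St (stage I m)) :
  St (stage I n) := eq_rect m (fun k => St (stage I k)) x n e.

(* Every element of A_I = \bigcup_n A_I^n lies in exactly one B_I^{k+1};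
   we represent A_I as the disjoint union of the B_I^{k+1}. *)
Definition AI (I : Cat) : Type := { k : nat & Bnew (stage I k) }.

Definition AIpt (I : Cat) (a : AI I) : St (stage I (S (projT1 a))) :=
  (inr (projT2 a) : St (extend (stage I (projT1 a)))).

(* a <= b in A_I iff this holds in some common stage A_I^n *)
Definition AIle (I : Cat) (a b : AI I) : Prop :=
  exists (j j' : nat) (e : j + S (projT1 a) = j' + S (projT1 b)),
    Sle (stage I (j' + S (projT1 b)))
        (castSt I _ _ e (embed I (S (projT1 a)) j (AIpt I a)))
        (embed I (S (projT1 b)) j' (AIpt I b)).

Definition is_poset (T : Type) (le : T -> T -> Prop) : Prop :=
  (forall x, le x x) /\
  (forall x y, le x y -> le y x -> x = y) /\
  (forall x y z, le x y -> le y z -> le x z).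

Definition cofinite (T : Type) (le : T -> T -> Prop) : Prop :=
  forall x, exists l : list T, forall z, le z x -> In z l.

Definition directed_poset (T : Type) (le : T -> T -> Prop) : Prop :=
  inhabited T /\ forall x y, exists z, le x z /\ le y z.

Definition infinite_height (T : Type) (le : T -> T -> Prop) : Prop :=
  forall x, exists y, le x y /\ x <> y.

(* Main.v *)
Require Import Defs.
From Stdlib Require Import List Lia Classical ClassicalEpsilon ProofIrrelevance Eqdep_dec Arith.

Section Main.
Variable I : Cat.

Fixpoint toAI (n : nat) : St (stage I n) -> AI I :=
  match n return St (stage I n) -> AI I with
  | 0 => fun x => match x with end
  | S n' => fun x => match x with
              | inl y => toAI n' y
              | inr b => existT _ n' b
              end
  end.

Lemma toAI_lt n : forall x, projT1 (toAI n x) < n.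
Proof.
  induction n as [|n IH]; intros x; [destruct x|].
  destruct x as [x|b]; simpl; [specialize (IH x); lia| lia].
Qed.

Lemma toAI_inj n : forall x y, toAI n x = toAI n y -> x = y.
Proof.
  induction n as [|n IH]; intros x y H; [destruct x|].
  destruct x as [x|b]; destruct y as [y|b']; simpl in H.
  - f_equal; auto.
  - exfalso; pose proof (toAI_lt n x) as L; rewrite H in L; simpl in L; lia.
  - exfalso; pose proof (toAI_lt n y) as L; rewrite <- H in L; simpl in L; lia.
  - f_equal. apply (inj_pair2_eq_dec _ Nat.eq_dec) in H; exact H.
Qed.

Lemma toAI_surj n : forall a, projT1 a < n -> exists x, toAI n x = a.
Proof.
  induction n as [|n IH]; intros a H; [lia|].
  destruct (Nat.eq_dec (projT1 a) n) as [E|E].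
  - destruct a as [k b]; simpl in E; subst k.
    exists (inr b : St (extend (stage I n))); reflexivity.
  - destruct (IH a) as [x Hx]; [lia|].
    exists (inl x : St (extend (stage I n))); exact Hx.
Qed.

Lemma toAI_embed m j x : toAI (j + m) (embed I m j x) = toAI m x.
Proof. induction j; simpl; auto. Qed.

Lemma Sle_embed m j x y :
  Sle (stage I (j + m)) (embed I m j x) (embed I m j y) <-> Sle (stage I m) x y.
Proof. induction j; simpl; tauto. Qed.

Lemma toAI_cast m n (e : m = n) x : toAI n (castSt I m n e x) = toAI m x.
Proof. destruct e; reflexivity. Qed.

Lemma Sle_level n : forall x y, Sle (stage I n) x y ->
  projT1 (toAI n x) <= projT1 (toAI n y).
Proof.
  induction n as [|n IH]; intros x y H; [destruct x|].
  destruct x as [x|b]; destruct y as [y|b']; simpl in *; auto;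
    try (pose proof (toAI_lt n x); lia); try (destruct H); try lia.
Qed.

Lemma Sle_refl n : forall x, Sle (stage I n) x x.
Proof.
  induction n as [|n IH]; intros x; [destruct x|].
  destruct x as [x|b]; simpl; auto.
Qed.

Lemma Sle_trans n : forall x y z, Sle (stage I n) x y -> Sle (stage I n) y z ->
  Sle (stage I n) x z.
Proof.
  induction n as [|n IH]; intros x y z H1 H2; [destruct x|].
  destruct x as [x|b]; destruct y as [y|b']; destruct z as [z|b'']; simpl in *;
    try tauto; try (subst; auto; fail).
  - eauto.
  - destruct (classic (x = y)) as [E|E]; [subst; auto|].
    apply (bR_section b'' H2). split; auto.
Qed.

Lemma Sle_antisym n : forall x y, Sle (stage I n) x y -> Sle (stage I n) y x -> x = y.
Proof.
  induction n as [|n IH]; intros x y H1 H2; [destruct x|].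
  destruct x as [x|b]; destruct y as [y|b']; simpl in *; try tauto.
  - f_equal; auto.
  - subst; auto.
Qed.

Lemma Sle_fin n : forall x, exists l, forall z, Sle (stage I n) z x -> In z l.
Proof.
  induction n as [|n IH]; intros x; [destruct x|].
  destruct x as [x|b].
  - destruct (IH x) as [l Hl].
    exists (map (fun c => inl c : St (extend (stage I n))) l).
    intros [z|b'] Hz; simpl in Hz; [apply in_map; auto|destruct Hz].
  - destruct (bR_finite b) as [l Hl].
    exists ((inr b : St (extend (stage I n))) :: map (fun c => inl c : St (extend (stage I n))) l).
    intros [z|b'] Hz; simpl in Hz.
    + right; apply in_map; apply Hl; auto.
    + left; subst; auto.
Qed.

Lemma Smor_funct n : forall x y z (h1 : Sle (stage I n) y x) (h2 : Sle (stage I n) z y)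
  (h3 : Sle (stage I n) z x),
  Smor (stage I n) x z h3 = comp (Smor (stage I n) y z h2) (Smor (stage I n) x y h1).
Proof.
  induction n as [|n IH]; intros x y z h1 h2 h3; [destruct x|].
  destruct x as [x|b]; destruct y as [y|b']; destruct z as [z|b''];
    simpl in *; try (exfalso; tauto).
  - apply IH.
  - apply bmor_funct.
  - destruct h1. simpl. rewrite comp_id_r. f_equal. apply proof_irrelevance.
  - destruct h2. destruct h1. rewrite (proof_irrelevance _ h3 eq_refl). simpl.
    rewrite comp_id_l. reflexivity.
Qed.

Definition Ele (a b : AI I) := exists n x y, toAI n x = a /\ toAI n y = b /\ Sle (stage I n) x y.

Lemma Ele_Rle a b : Ele a b -> forall n x y, toAI n x = a -> toAI n y = b -> Sle (stage I n) x y.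
Proof.
  intros (n0 & x0 & y0 & Ha & Hb & H) n x y Hx Hy.
  destruct (le_lt_dec n0 n) as [L|L].
  - assert (exists j, n = j + n0) as [j ->] by (exists (n - n0); lia).
    assert (E1 : embed I n0 j x0 = x) by (apply toAI_inj; rewrite toAI_embed; congruence).
    assert (E2 : embed I n0 j y0 = y) by (apply toAI_inj; rewrite toAI_embed; congruence).
    subst. apply Sle_embed. auto.
  - assert (exists j, n0 = j + n) as [j ->] by (exists (n0 - n); lia).
    assert (E1 : embed I n j x = x0) by (apply toAI_inj; rewrite toAI_embed; congruence).
    assert (E2 : embed I n j y = y0) by (apply toAI_inj; rewrite toAI_embed; congruence).
    subst. apply Sle_embed in H. auto.
Qed.

Lemma AIle_Ele a b : AIle I a b <-> Ele a b.
Proof.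
  split.
  - intros (j & j' & e & H).
    exists (j' + S (projT1 b)), (castSt I _ _ e (embed I (S (projT1 a)) j (AIpt I a))),
      (embed I (S (projT1 b)) j' (AIpt I b)).
    rewrite toAI_cast, !toAI_embed. destruct a, b; simpl. auto.
  - intros H.
    assert (e : projT1 b + S (projT1 a) = projT1 a + S (projT1 b)) by lia.
    exists (projT1 b), (projT1 a), e.
    apply (Ele_Rle a b H).
    + rewrite toAI_cast, toAI_embed. destruct a; reflexivity.
    + rewrite toAI_embed. destruct b; reflexivity.
Qed.

Hypothesis HI : directed_cat I.

Lemma eq_fin (T : Type) (Q : T -> Prop) (t : T -> Ob I) (u0 : Ob I)
  (f g : forall c, Q c -> Hom I u0 (t c)) (l : list T) :
  exists u (h : Hom I u u0), forall c (q : Q c), In c l -> comp (f c q) h = comp (g c q) h.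
Proof.
  induction l as [|c l IH].
  - exists u0, (idm u0). intros c q [].
  - destruct IH as (u1 & h1 & H1).
    destruct (classic (Q c)) as [q0|nq].
    + destruct HI as (_ & _ & Heq).
      destruct (Heq _ _ (comp (f c q0) h1) (comp (g c q0) h1)) as (u2 & h2 & H2).
      exists u2, (comp h1 h2). intros c' q [E|Hin].
      * subst c'. rewrite (proof_irrelevance _ q q0). rewrite !comp_assoc. exact H2.
      * rewrite !comp_assoc. rewrite H1; auto.
    + exists u1, h1. intros c' q [E|Hin]; [subst; contradiction|auto].
Qed.

Lemma filter_prop (T : Type) (P : T -> Prop) (l : list T) :
  exists l', forall c, (P c /\ In c l) <-> In c l'.
Proof.
  induction l as [|a l IH].
  - exists nil; simpl; tauto.
  - destruct IH as [l' H]. destruct (classic (P a)) as [Pa|nPa].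
    + exists (a :: l'). intros c; simpl; rewrite <- H. split.
      * intros [Pc [->|Hc]]; auto.
      * intros [<-|Hc]; tauto.
    + exists l'. intros c; simpl; rewrite <- H. split; [|tauto].
      intros [Pc [<-|Hc]]; tauto.
Qed.

Definition or_right_of {P Q : Prop} (h : P \/ Q) (n : ~ P) : Q :=
  match h with or_introl p => False_ind _ (n p) | or_intror q => q end.

Definition bm n (x y : St (stage I n)) u (F : Hom I u (Sob _ x)) (G : Hom I u (Sob _ y))
  (c : St (stage I n)) (hc : Sle _ c x \/ Sle _ c y) : Hom I u (Sob _ c) :=
  match excluded_middle_informative (Sle _ c x) with
  | left hx => comp (Smor _ x c hx) F
  | right nx => comp (Smor _ y c (or_right_of hc nx)) G
  end.

Lemma upper n (x y : St (stage I n)) : exists b : Bnew (stage I n), bR b x /\ bR b y.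
Proof.
  destruct (Sle_fin n x) as [lx Hlx].
  destruct (Sle_fin n y) as [ly Hly].
  destruct HI as (_ & Hdir & _).
  destruct (Hdir (Sob _ x) (Sob _ y)) as (u0 & F0 & G0 & _).
  destruct (eq_fin _ (fun c => Sle _ c x /\ Sle _ c y) (Sob _) u0
     (fun c q => comp (Smor _ x c (proj1 q)) F0)
     (fun c q => comp (Smor _ y c (proj2 q)) G0) lx) as (u & h & Hh).
  set (F := comp F0 h). set (G := comp G0 h).
  assert (E : forall c hx hy, comp (Smor _ x c hx) F = comp (Smor _ y c hy) G).
  { intros c hx hy. unfold F, G. rewrite !comp_assoc.
    specialize (Hh c (conj hx hy) (Hlx c hx)). rewrite (proof_irrelevance _ (proj1 _) hx), (proof_irrelevance _ (proj2 _) hy) in Hh. exact Hh. }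
  assert (fin : exists l, forall c, (Sle _ c x \/ Sle _ c y) <-> In c l).
  { destruct (filter_prop _ (fun c => Sle _ c x \/ Sle _ c y) (lx ++ ly)) as [l Hl].
    exists l. intros c. rewrite <- Hl. split; [|tauto].
    intros H; split; auto. apply in_or_app. destruct H; auto. }
  assert (sec : forall c d, (Sle _ c x \/ Sle _ c y) -> Slt _ d c ->
                   (Sle _ d x \/ Sle _ d y)).
  { intros c d [H|H] [H' _]; [left|right]; eapply Sle_trans; eauto. }
  assert (funct : forall c d (hc : Sle _ c x \/ Sle _ c y) (hd : Sle _ d x \/ Sle _ d y)
     (hh : Sle _ d c), bm n x y u F G d hd = comp (Smor _ c d hh) (bm n x y u F G c hc)).
  { intros c d hc hd hh. unfold bm.
    destruct (excluded_middle_informative (Sle _ c x)) as [hcx|ncx];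
    destruct (excluded_middle_informative (Sle _ d x)) as [hdx|ndx].
    - rewrite comp_assoc. f_equal. apply Smor_funct.
    - exfalso. apply ndx. eapply Sle_trans; eauto.
    - rewrite (E d hdx (Sle_trans _ _ _ _ hh (or_right_of hc ncx))).
      rewrite comp_assoc. f_equal. apply Smor_funct.
    - rewrite comp_assoc. f_equal. apply Smor_funct. }
  exists {| bR := fun c => Sle _ c x \/ Sle _ c y; bR_finite := fin; bR_section := sec;
            binf := u; bmor := bm n x y u F G; bmor_funct := funct |}.
  simpl. split; [left|right]; apply Sle_refl.
Qed.
End Main.

Theorem lemma3p9 (I : Cat) (HI : directed_cat I) :
  is_poset (AI I) (AIle I) /\ cofinite (AI I) (AIle I) /\
  directed_poset (AI I) (AIle I) /\ infinite_height (AI I) (AIle I).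
Proof.
  assert (Hup : forall a b : AI I, exists z, AIle I a z /\ AIle I b z /\ projT1 a < projT1 z).
  { intros a b.
    set (n := S (Nat.max (projT1 a) (projT1 b))).
    destruct (toAI_surj I n a) as [x Hx]; [unfold n; lia|].
    destruct (toAI_surj I n b) as [y Hy]; [unfold n; lia|].
    destruct (upper I HI n x y) as [bz [Hbx Hby]].
    exists (existT _ n bz). split; [|split]; [apply AIle_Ele..|simpl; unfold n; lia].
    - exists (S n), (inl x : St (extend (stage I n))), (inr bz : St (extend (stage I n))).
      simpl. auto.
    - exists (S n), (inl y : St (extend (stage I n))), (inr bz : St (extend (stage I n))).
      simpl. auto. }
  split; [|split; [|split]].
  - split; [|split].
    + intros a. apply AIle_Ele. exists (S (projT1 a)), (AIpt I a), (AIpt I a).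
      destruct a; simpl. split; auto.
    + intros a b Hab Hba. apply AIle_Ele in Hab. apply AIle_Ele in Hba.
      set (n := S (Nat.max (projT1 a) (projT1 b))).
      destruct (toAI_surj I n a) as [x Hx]; [unfold n; lia|].
      destruct (toAI_surj I n b) as [y Hy]; [unfold n; lia|].
      pose proof (Ele_Rle I _ _ Hab n x y Hx Hy).
      pose proof (Ele_Rle I _ _ Hba n y x Hy Hx).
      rewrite <- Hx, <- Hy. f_equal. apply Sle_antisym; auto.
    + intros a b c Hab Hbc. apply AIle_Ele in Hab. apply AIle_Ele in Hbc. apply AIle_Ele.
      set (n := S (Nat.max (projT1 a) (Nat.max (projT1 b) (projT1 c)))).
      destruct (toAI_surj I n a) as [x Hx]; [unfold n; lia|].
      destruct (toAI_surj I n b) as [y Hy]; [unfold n; lia|].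
      destruct (toAI_surj I n c) as [z Hz]; [unfold n; lia|].
      exists n, x, z. split; auto. split; auto.
      eapply Sle_trans; [eapply (Ele_Rle I _ _ Hab)|eapply (Ele_Rle I _ _ Hbc)]; eauto.
  - intros [k B].
    destruct (bR_finite B) as [l Hl].
    exists (existT _ k B :: map (toAI I k) l).
    intros z Hz. apply AIle_Ele in Hz.
    assert (Lz : projT1 z <= k).
    { destruct Hz as (n & x & y & Hx & Hy & H).
      pose proof (Sle_level I n x y H). rewrite Hx, Hy in *. simpl in *. lia. }
    destruct (toAI_surj I (S k) z) as [x Hx]; [lia|].
    pose proof (Ele_Rle I _ _ Hz (S k) x (inr B : St (extend (stage I k))) Hx eq_refl) as H.
    destruct x as [c|B']; simpl in H, Hx.
    + right. rewrite <- Hx. apply in_map. apply Hl. exact H.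
    + left. subst. reflexivity.
  - split.
    + destruct HI as [[o] _].
      constructor. exists 0.
      refine {| bR := fun _ => False; binf := o; bmor := fun c hc => False_rect _ hc |}.
      * exists nil. simpl. tauto.
      * intros x _ [].
      * intros c _ [].
    + intros a b. destruct (Hup a b) as (z & H1 & H2 & _). eauto.
  - intros a. destruct (Hup a a) as (z & H1 & _ & H3). exists z. split; auto.
    intros E; subst; lia.
Qed.
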